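(* For every nondegenerate counterclockwise triangle $(A,B,C)$ there exists a unique hexagonal grid $\varphi$ with reference triangle $(A,B,C)$, i.e. with $\varphi(\{0,1\})=A$, $\varphi(\{1,\zeta\})=B$, $\varphi(\{\zeta,0\})=C$.
   Context: Let $\zeta=e^{i\pi/3}$ and $\Lambda=\{m+n\zeta: m,n\in\mathbb{Z}\}$. Call $p,q\in\Lambda$ adjacent if $|p-q|=1$, and let $\mathcal{E}$ be the set of unordered pairs $\{p,q\}$ of adjacent lattice points. A hexagonal grid is a map $\varphi:\mathcal{E}\to\mathbb{C}$ such that for every $p\in\Lambda$ there exist $c_p,r_p\in\mathbb{C}$ with $\varphi(\{p,p+\zeta^k\})=c_p+r_p\zeta^k$ for $k=0,\dots,5$. Thus the six points form a regular, possibly degenerate, hexagon $H_p$ listed counterclockwise. For each set $\{p,q,s\}\subset\Lambda$ of three pairwise adjacent lattice points listed counterclockwise, the corresponding triangle of the grid is $(\varphi(\{p,q\}),\varphi(\{q,s\}),\varphi(\{s,p\}))$. The reference triangle of $\varphi$ is $(\varphi(\{0,1\}),\varphi(\{1,\zeta\}),\varphi(\{\zeta,0\}))$. When the reference triangle is counterclockwise and nondegenerate, the three hexagons $H_0,H_1,H_\zeta$ are the regular hexagons erected outwardly on its sides. The grid triangles sharing a vertex with the reference triangle are its flank triangles. *)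

(* Defs.v *)
From HB Require Import structures.
From mathcomp Require Import all_boot all_order all_algebra.
From mathcomp Require Import complex.
From mathcomp Require Import reals.
Set Implicit Arguments. Unset Strict Implicit. Unset Printing Implicit Defensive.
Import Order.TTheory GRing.Theory Num.Theory.
Local Open Scope ring_scope.
Local Open Scope complex_scope.

Definition zeta (R : realType) : R[i] := (2^-1) +i* (Num.sqrt 3 / 2).

Definition in_lattice (R : realType) (z : R[i]) : Prop :=
  exists m n : int, z = m%:~R + n%:~R * zeta R.

Definition adjacent (R : realType) (p q : R[i]) : Prop := `|p - q| = 1.

(* A map on the unordered adjacent pairs {p,q} is encoded as a function
   phi : C -> C -> C, of which only the values phi p q with p, q adjacent
   lattice points are relevant, and which is symmetric there. *)
Definition hexagonal_grid (R : realType) (phi : R[i] -> R[i] -> R[i]) : Prop :=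
  (forall p q, in_lattice p -> in_lattice q -> adjacent p q -> phi p q = phi q p) /\
  (forall p, in_lattice p -> exists c r : R[i],
      forall k : nat, (k < 6)%N -> phi p (p + zeta R ^+ k) = c + r * zeta R ^+ k).

Definition ccw_nondegenerate (R : realType) (A B C : R[i]) : Prop :=
  0 < complex.Im ((B - A)^* * (C - A)).

Definition has_reference_triangle (R : realType) (phi : R[i] -> R[i] -> R[i])
    (A B C : R[i]) : Prop :=
  [/\ phi 0 1 = A, phi 1 (zeta R) = B & phi (zeta R) 0 = C].

(* Main.v *)
Require Import Defs.
From HB Require Import structures.
From mathcomp Require Import all_boot all_order all_algebra.
From mathcomp Require Import complex.
From mathcomp Require Import reals.
From mathcomp Require Import ring lra zify.
Import Order.TTheory GRing.Theory Num.Theory.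
Local Open Scope ring_scope.
Set Implicit Arguments. Unset Strict Implicit.

Lemma z2 (R : realType) : zeta R ^+ 2 = zeta R - 1.
Proof.
rewrite /zeta expr2; apply/eqP; rewrite eq_complex /=.
have h3 : Num.sqrt (3:R) ^+ 2 = 3 by rewrite sqr_sqrtr // ler0n.
apply/andP; split; apply/eqP.
  move: h3; set s := Num.sqrt _ => h3; rewrite expr2 in h3.
  have -> : s / 2 * (s / 2) = (s * s) / 4 by field.
  by rewrite h3; field.
by field.
Qed.

Lemma zc (R : realType) : ((zeta R)^*)%C = 1 - zeta R.
Proof.
rewrite /zeta; apply/eqP; rewrite eq_complex /=.
by apply/andP; split; apply/eqP; field.
Qed.

Lemma zne0 (R : realType) : zeta R != 0.
Proof. rewrite /zeta eq_complex /= negb_and; apply/orP; left.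
by rewrite invr_eq0 pnatr_eq0. Qed.

Lemma zne1 (R : realType) : zeta R != 1.
Proof. rewrite /zeta eq_complex /= negb_and; apply/orP; left.
apply/eqP => h. have : (2:R) * 2^-1 = 2 * 1 by rewrite h.
rewrite divff ?pnatr_eq0 //. lra. Qed.

Lemma z3 (R : realType) : zeta R ^+ 3 = -1.
Proof.
have -> : zeta R ^+ 3 = zeta R ^+ 2 * zeta R by rewrite exprSr.
rewrite z2 mulrBl mul1r -expr2 z2; ring.
Qed.

Lemma z6 (R : realType) : zeta R ^+ 6 = 1.
Proof. by rewrite (_ : 6 = 3 * 2)%N // exprM z3 expr2 mulrNN mulr1. Qed.

Lemma normz (R : realType) : `|zeta R| = 1.
Proof.
have h : `|zeta R| ^+ 2 = 1.
  by rewrite sqr_normc zc mulrBr mulr1 -expr2 z2; ring.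
by apply/eqP; rewrite -sqrp_eq1 ?normr_ge0 // h.
Qed.

Lemma normzk (R : realType) k : `|zeta R ^+ k| = 1.
Proof. by rewrite normrX normz expr1n. Qed.

Definition sP (R : realType) (A C : R[i]) := (A - C) / (1 - zeta R).
Definition c0P (R : realType) (A C : R[i]) := A - sP A C.
Definition tP (R : realType) (A B C : R[i]) :=
  (B - c0P A C - sP A C * (1 + zeta R)) / zeta R.
Definition FF (R : realType) (A B C : R[i]) (p q : R[i]) :=
  c0P A C + sP A C * (p + q) + tP A B C * p * q.

Lemma FF_sym (R : realType) (A B C p q : R[i]) : FF A B C p q = FF A B C q p.
Proof. rewrite /FF; ring. Qed.

Lemma FF_hex (R : realType) (A B C p : R[i]) : forall u,
  FF A B C p (p + u) =
  (c0P A C + sP A C * (2 * p) + tP A B C * p * p) + (sP A C + tP A B C * p) * u.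
Proof. move=> u; rewrite /FF; ring. Qed.

Lemma FF_grid (R : realType) (A B C : R[i]) : hexagonal_grid (FF A B C).
Proof.
split; first by move=> p q _ _ _; apply: FF_sym.
move=> p _; eexists; eexists => k _; apply: FF_hex.
Qed.

Lemma FF_ref (R : realType) (A B C : R[i]) : has_reference_triangle (FF A B C) A B C.
Proof.
have h1 : 1 - zeta R != 0 by rewrite subr_eq0 eq_sym zne1.
have h0 := zne0 R.
rewrite /FF /tP /c0P /sP; split; field; by rewrite h0 h1.
Qed.

Definition S (R : realType) (phi : R[i] -> R[i] -> R[i]) (A B C p : R[i]) :=
  forall k, phi p (p + zeta R ^+ k) = FF A B C p (p + zeta R ^+ k).

Lemma hex_any (R : realType) phi (p : R[i]) : hexagonal_grid phi -> in_lattice p ->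
  exists c r : R[i], forall k, phi p (p + zeta R ^+ k) = c + r * zeta R ^+ k.
Proof.
move=> [_ H] lp; have [c [r Hk]] := H p lp; exists c, r => k.
have e : zeta R ^+ k = zeta R ^+ (k %% 6) by rewrite expr_mod // z6.
by rewrite e; apply: Hk; rewrite ltn_mod.
Qed.

Lemma two_to_all (R : realType) phi (A B C p : R[i]) j :
  hexagonal_grid phi -> in_lattice p ->
  phi p (p + zeta R ^+ j) = FF A B C p (p + zeta R ^+ j) ->
  phi p (p + zeta R ^+ j.+1) = FF A B C p (p + zeta R ^+ j.+1) ->
  S phi A B C p.
Proof.
move=> g lp; have [c [r Hk]] := hex_any g lp.
rewrite !Hk !FF_hex.
set c' := (c0P A C + _ + _); set r' := (sP A C + _).
set a := zeta R ^+ j; set b := zeta R ^+ j.+1 => h1 h2.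
have ab : a - b != 0.
  have -> : a - b = zeta R ^+ j * (1 - zeta R) by rewrite /a /b exprSr; ring.
  by rewrite mulf_eq0 negb_or expf_neq0 ?zne0 // subr_eq0 eq_sym zne1.
have hr : r = r'.
  have e : (r - r') * (a - b) = ((c + r*a) - (c' + r'*a)) - ((c + r*b) - (c'+r'*b)) by ring.
  rewrite h1 h2 !subrr in e.
  by apply/eqP; rewrite -subr_eq0; move/eqP: e; rewrite mulf_eq0 (negbTE ab) orbF.
have hc : c = c' by move: h1; rewrite hr => /addIr.
by move=> k; rewrite Hk FF_hex hr hc.
Qed.

Definition L (R : realType) (m n : int) : R[i] := m%:~R + n%:~R * zeta R.

Lemma L_lat (R : realType) m n : in_lattice (L R m n).
Proof. by exists m, n. Qed.

Lemma adj_z (R : realType) (x : R[i]) j : adjacent x (x + zeta R ^+ j).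
Proof. by rewrite /adjacent opprD addrA subrr add0r normrN normzk. Qed.

Lemma adj_z' (R : realType) (x : R[i]) j : adjacent (x + zeta R ^+ j) x.
Proof. by rewrite /adjacent addrAC subrr add0r normzk. Qed.

Lemma step (R : realType) phi (A B C : R[i]) (k : nat) (m1 n1 m2 n2 m3 n3 dm dn dm' dn' : int) :
  hexagonal_grid phi ->
  zeta R ^+ k = dm%:~R + dn%:~R * zeta R ->
  zeta R ^+ k.+1 = dm'%:~R + dn'%:~R * zeta R ->
  m2 = m1 + dm -> n2 = n1 + dn -> m3 = m1 + dm' -> n3 = n1 + dn' ->
  S phi A B C (L R m1 n1) -> S phi A B C (L R m2 n2) -> S phi A B C (L R m3 n3).
Proof.
move=> g ek ek1 -> -> -> -> Sp Sp'.
set p := L R m1 n1.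
have hp' : L R (m1 + dm) (n1 + dn) = p + zeta R ^+ k by rewrite ek /p /L !rmorphD /=; ring.
have hw : L R (m1 + dm') (n1 + dn') = p + zeta R ^+ k.+1 by rewrite ek1 /p /L !rmorphD /=; ring.
have lp : in_lattice p by apply: L_lat.
have lp' := L_lat R (m1 + dm) (n1 + dn).
have lw := L_lat R (m1 + dm') (n1 + dn').
rewrite hp' in Sp' lp'; rewrite hw in lw *.
have e4 : zeta R ^+ k.+4 = - zeta R ^+ k.+1.
  have -> : zeta R ^+ k.+4 = zeta R ^+ 3 * zeta R ^+ k.+1 by rewrite -exprD.
  by rewrite z3 mulN1r.
have e5 : zeta R ^+ k.+4.+1 = zeta R ^+ k - zeta R ^+ k.+1.
  have -> : zeta R ^+ k.+4.+1 = zeta R ^+ 3 * zeta R ^+ 2 * zeta R ^+ k by rewrite -!exprD.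
  by rewrite z3 z2 exprS; ring.
have e2 : zeta R ^+ k.+2 = zeta R ^+ k.+1 - zeta R ^+ k.
  have -> : zeta R ^+ k.+2 = zeta R ^+ 2 * zeta R ^+ k by rewrite -exprD.
  by rewrite z2 exprS; ring.
apply: (@two_to_all R phi A B C _ k.+4) => //.
  have -> : p + zeta R ^+ k.+1 + zeta R ^+ k.+4 = p by rewrite e4; ring.
  have [g1 _] := g.
  rewrite g1 //; last exact: adj_z'.
  by rewrite Sp FF_sym.
have -> : p + zeta R ^+ k.+1 + zeta R ^+ k.+4.+1 = p + zeta R ^+ k by rewrite e5; ring.
have -> : p + zeta R ^+ k.+1 = (p + zeta R ^+ k) + zeta R ^+ k.+2 by rewrite e2; ring.
have lw' : in_lattice (p + zeta R ^+ k + zeta R ^+ k.+2).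
  by rewrite e2 addrA (addrAC p) addrK.
have [g1 _] := g.
rewrite g1 //; last exact: adj_z'.
by rewrite Sp' FF_sym.
Qed.

Lemma u0 (R : realType) : zeta R ^+ 0 = (1:int)%:~R + (0:int)%:~R * zeta R.
Proof. by rewrite expr0 /=; ring. Qed.
Lemma u1 (R : realType) : zeta R ^+ 1 = (0:int)%:~R + (1:int)%:~R * zeta R.
Proof. by rewrite expr1 /=; ring. Qed.
Lemma u2 (R : realType) : zeta R ^+ 2 = (-1:int)%:~R + (1:int)%:~R * zeta R.
Proof. by rewrite z2 /=; ring. Qed.
Lemma u3 (R : realType) : zeta R ^+ 3 = (-1:int)%:~R + (0:int)%:~R * zeta R.
Proof. by rewrite z3 /=; ring. Qed.
Lemma u4 (R : realType) : zeta R ^+ 4 = (0:int)%:~R + (-1:int)%:~R * zeta R.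
Proof. by rewrite (_ : 4 = 3 + 1)%N // exprD z3 expr1 /=; ring. Qed.
Lemma u5 (R : realType) : zeta R ^+ 5 = (1:int)%:~R + (-1:int)%:~R * zeta R.
Proof. by rewrite (_ : 5 = 3 + 2)%N // exprD z3 z2 /=; ring. Qed.
Lemma u6 (R : realType) : zeta R ^+ 6 = (1:int)%:~R + (0:int)%:~R * zeta R.
Proof. by rewrite z6 /=; ring. Qed.

Lemma int_ind2 (P : int -> Prop) : P 0 -> (forall x, P x -> P (x + 1)) ->
  (forall x, P x -> P (x - 1)) -> forall x, P x.
Proof.
move=> H0 Hs Hp; elim/int_rec => //.
  move=> n h; have e : (n.+1 : int) = n%:Z + 1 by lia.
  by rewrite e; apply: Hs.
move=> n h; have e : (- (n.+1 : int)) = - n%:Z - 1 by lia.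
by rewrite e; apply: Hp.
Qed.

Lemma unit_dir (R : realType) (a b : int) :
  `|a%:~R + b%:~R * zeta R| = 1 -> exists k, a%:~R + b%:~R * zeta R = zeta R ^+ k.
Proof.
move=> h.
have e : (a%:~R + b%:~R * zeta R) * (a%:~R + b%:~R * (1 - zeta R)) =
          (a*a + a*b + b*b)%:~R :> R[i].
  have -> : (a%:~R + b%:~R * zeta R) * (a%:~R + b%:~R * (1 - zeta R)) =
     (a*a + a*b)%:~R + (b*b)%:~R * (zeta R - zeta R ^+ 2) :> R[i]. rewrite !intrD !intrM.
    have H : forall x y z : R[i], (x + y * z) * (x + y * (1 - z)) = x * x + x * y + y * y * (z - z ^+ 2) by move=> x y z; ring.
    exact: H.
  rewrite z2 !intrD !intrM.
  have H : forall x y z : R[i], x * x + x * y + y * y * (z - (z - 1)) = x * x + x * y + y * y by move=> x y z; ring.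
  exact: H.
have e2 : ((a*a + a*b + b*b)%:~R : R[i]) = (1:int)%:~R.
  have hc : ((a%:~R + b%:~R * zeta R)^*)%C = a%:~R + b%:~R * (1 - zeta R) :> R[i].
    by rewrite rmorphD rmorphM !rmorph_int -zc.
  by rewrite -e -hc -sqr_normc h expr1n.
have e3 := intr_inj e2.
have hb : b = 0 \/ b = 1 \/ b = -1 by nia.
case: hb => [hb|[hb|hb]]; subst b.
- have ha : a = 1 \/ a = -1 by nia.
  case: ha => ha; subst a; [exists 0%N; exact/esym/u0 | exists 3%N; exact/esym/u3].
- have ha : a = 0 \/ a = -1 by nia.
  case: ha => ha; subst a; [exists 1%N; exact/esym/u1 | exists 2%N; exact/esym/u2].
- have ha : a = 0 \/ a = 1 by nia.
  case: ha => ha; subst a; [exists 4%N; exact/esym/u4 | exists 5%N; exact/esym/u5].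
Qed.

Lemma base (R : realType) phi (A B C : R[i]) :
  hexagonal_grid phi -> has_reference_triangle phi A B C ->
  S phi A B C (L R 0 0) /\ S phi A B C (L R (0 + 1) 0).
Proof.
move=> g [hA hB hC]; have [fA fB fC] := FF_ref A B C.
have [g1 _] := g.
have e0 : L R 0 0 = 0 by rewrite /L /=; ring.
have e1 : L R (0 + 1) 0 = 1 by rewrite /L /=; ring.
have l0 : in_lattice (0 : R[i]) by rewrite -e0; apply: L_lat.
have l1 : in_lattice (1 : R[i]) by rewrite -e1; apply: L_lat.
have lz : in_lattice (zeta R) by exists 0, 1; rewrite /=; ring.
rewrite e0 e1; split.
- apply: (@two_to_all R phi A B C 0 0%N g l0).
    by rewrite add0r expr0 hA fA.
  rewrite add0r expr1 g1 //; first by rewrite hC FF_sym fC.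
  by have := adj_z (0:R[i]) 1; rewrite add0r expr1.
- apply: (@two_to_all R phi A B C 1 2%N g l1).
    have -> : 1 + zeta R ^+ 2 = zeta R by rewrite z2; ring.
    by rewrite hB fB.
  have -> : 1 + zeta R ^+ 3 = 0 by rewrite z3; ring.
  rewrite g1 //; first by rewrite hA FF_sym fA.
  by have := adj_z (1:R[i]) 3; rewrite z3 subrr.
Qed.

Definition G (R : realType) phi (A B C : R[i]) m n :=
  S phi A B C (L R m n) /\ S phi A B C (L R (m + 1) n).

Lemma Gup (R : realType) phi (A B C : R[i]) m n : hexagonal_grid phi ->
  G phi A B C m n -> G phi A B C m (n + 1).
Proof.
move=> g [h1 h2].
have s1 : S phi A B C (L R m (n + 1)).
  by apply: (@step R phi A B C 0 m n (m+1) n m (n+1) 1 0 0 1 g (u0 R) (u1 R)) => //; lia.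
have s2 : S phi A B C (L R (m + 1) (n + 1)).
  by apply: (@step R phi A B C 5 m (n+1) (m+1) n (m+1) (n+1) 1 (-1) 1 0 g (u5 R) (u6 R)) => //; lia.
by split.
Qed.

Lemma Gdown (R : realType) phi (A B C : R[i]) m n : hexagonal_grid phi ->
  G phi A B C m n -> G phi A B C m (n - 1).
Proof.
move=> g [h1 h2].
have t1 : S phi A B C (L R (m + 1) (n - 1)).
  by apply: (@step R phi A B C 3 (m+1) n m n (m+1) (n-1) (-1) 0 0 (-1) g (u3 R) (u4 R)) => //; lia.
have t2 : S phi A B C (L R m (n - 1)).
  by apply: (@step R phi A B C 2 (m+1) (n-1) m n m (n-1) (-1) 1 (-1) 0 g (u2 R) (u3 R)) => //; lia.
by split.
Qed.

Lemma Gright (R : realType) phi (A B C : R[i]) m n : hexagonal_grid phi ->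
  G phi A B C m n -> G phi A B C (m + 1) n.
Proof.
move=> g h; have [h1 h2] := h; have [s1 s2] := Gup g h.
have s3 : S phi A B C (L R (m + 1 + 1) n).
  by apply: (@step R phi A B C 4 (m+1) (n+1) (m+1) n (m+1+1) n 0 (-1) 1 (-1) g (u4 R) (u5 R)) => //; lia.
by split.
Qed.

Lemma Gleft (R : realType) phi (A B C : R[i]) m n : hexagonal_grid phi ->
  G phi A B C m n -> G phi A B C (m - 1) n.
Proof.
move=> g h; have [h1 h2] := h; have [t1 t2] := Gdown g h.
have t3 : S phi A B C (L R (m - 1) n).
  by apply: (@step R phi A B C 1 m (n-1) m n (m-1) n 0 1 (-1) 1 g (u1 R) (u2 R)) => //; lia.
split => //; by rewrite subrK.
Qed.

Lemma Gall (R : realType) phi (A B C : R[i]) : hexagonal_grid phi ->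
  has_reference_triangle phi A B C -> forall m n, S phi A B C (L R m n).
Proof.
move=> g r.
have H0 : forall n, G phi A B C 0 n.
  apply: int_ind2; first exact: base.
  - by move=> x; apply: Gup.
  - by move=> x; apply: Gdown.
move=> m n; suff : G phi A B C m n by case.
move: m; apply: int_ind2; first exact: H0.
- by move=> x; apply: Gright.
- by move=> x; apply: Gleft.
Qed.

Lemma uniqF (R : realType) phi (A B C : R[i]) : hexagonal_grid phi ->
  has_reference_triangle phi A B C ->
  forall p q, in_lattice p -> in_lattice q -> adjacent p q -> phi p q = FF A B C p q.
Proof.
move=> g r p q [m [n hp]] [m' [n' hq]] adj.
have hd : q - p = (m' - m)%:~R + (n' - n)%:~R * zeta R.
  rewrite hp hq !intrB.
  have H : forall (x y x' y' z : R[i]), x' + y' * z - (x + y * z) = x' - x + (y' - y) * z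
    by move=> *; ring.
  exact: H.
have [k hk] : exists k, (m' - m)%:~R + (n' - n)%:~R * zeta R = zeta R ^+ k.
  by apply: unit_dir; rewrite -hd distrC.
have -> : q = p + zeta R ^+ k by rewrite -hk -hd addrC subrK.
have -> : p = L R m n by [].
exact: Gall.
Qed.

Unset Implicit Arguments.

Theorem mainTheorem6 (R : realType) (A B C : R[i]) :
  ccw_nondegenerate A B C ->
  (exists phi, hexagonal_grid phi /\ has_reference_triangle phi A B C) /\
  (forall phi1 phi2,
      hexagonal_grid phi1 -> has_reference_triangle phi1 A B C ->
      hexagonal_grid phi2 -> has_reference_triangle phi2 A B C ->
      forall p q, in_lattice p -> in_lattice q -> adjacent p q ->
        phi1 p q = phi2 p q).
Proof.
move=> _; split.
  by exists (FF A B C); split; [apply: FF_grid | apply: FF_ref].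
move=> phi1 phi2 g1 r1 g2 r2 p q lp lq a.
by rewrite (uniqF g1 r1 lp lq a) (uniqF g2 r2 lp lq a).
Qed.
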